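(* Let $C_\theta=\cos\theta\,(|\uparrow\rangle\langle\uparrow|+|\downarrow\rangle\langle\downarrow|)+\sin\theta\,(|\uparrow\rangle\langle\downarrow|-|\downarrow\rangle\langle\uparrow|)$ and $\gamma_{\varphi}=\cos\varphi\,|\uparrow\rangle+\sin\varphi\,|\downarrow\rangle$. (i) If $\theta\in(0,\pi/2)$ and $\varphi_1,\varphi_2\in[0,\pi/2]$ satisfy $\varphi_1+\varphi_2=\theta$, then $(C_\theta,\gamma_{\varphi_1})\sim_l(C_\theta,\gamma_{\varphi_2})$. (ii) For $\theta=1.2$, $\varphi_1=0.2$, $\varphi_2=1.0$, the setups $(C_\theta,\gamma_{\varphi_1})$ and $(C_\theta,\gamma_{\varphi_2})$ are not distributionally equivalent; in particular $p_{(C_\theta,\gamma_{\varphi_1})}(\cdot,2)\neq p_{(C_\theta,\gamma_{\varphi_2})}(\cdot,2)$. Hence asymptotic distributional equivalence does not imply distributional equivalence.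
   Context: $\mathcal{H}=\ell^2(\mathbb{Z})\otimes\mathbb{C}^2$ with position basis $\{|j\rangle\}$ and coin basis $\{|\uparrow\rangle,|\downarrow\rangle\}$. A coin $C=a|\uparrow\rangle\langle\uparrow|+b|\uparrow\rangle\langle\downarrow|+c|\downarrow\rangle\langle\uparrow|+d|\downarrow\rangle\langle\downarrow|\in U(2)$ is non-trivial iff $abcd\neq0$. $T=\sum_{j}|j+1\rangle\langle j|\otimes|\uparrow\rangle\langle\uparrow|+\sum_{j}|j-1\rangle\langle j|\otimes|\downarrow\rangle\langle\downarrow|$, $W(C)=T(\mathbb{1}\otimes C)$. A coin setup $(C,\gamma)$, $\gamma=\alpha|\uparrow\rangle+\beta|\downarrow\rangle$ a unit vector, induces $p_{(C,\gamma)}(j,n)=\langle\psi_n|(|j\rangle\langle j|\otimes\mathbb{1})|\psi_n\rangle$, $\psi_n=W(C)^n(|0\rangle\otimes\gamma)$. Distributional equivalence $\mathcal{C}_1\sim_d\mathcal{C}_2$ means $p_{\mathcal{C}_1}(j,n)=p_{\mathcal{C}_2}(j,n)$ for all $j\in\mathbb{Z}$, $n\in\mathbb{N}$. Known fact (Konno): for a non-trivial coin, if $X_n\sim p_{\mathcal{C}}(\cdot,n)$ then $X_n/n$ converges in distribution to the law with density $f_{\mathcal{C}}(x)=\dfrac{\sqrt{1-|a|^2}\,(1-\lambda_{\mathcal{C}}x)}{\pi(1-x^2)\sqrt{|a|^2-x^2}}$ on $(-|a|,|a|)$ (zero elsewhere), with $\lambda_{\mathcal{C}}=|\alpha|^2-|\beta|^2+\frac{a\alpha\overline{b\beta}+\overline{a\alpha}b\beta}{|a|^2}$.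 Asymptotic distributional equivalence $\mathcal{C}_1\sim_l\mathcal{C}_2$ (for non-trivial coins) means $f_{\mathcal{C}_1}=f_{\mathcal{C}_2}$. *)

(* Defs.v *)
From Stdlib Require Import Reals ZArith.
From Coquelicot Require Import Coquelicot.
Open Scope R_scope.

(* A coin C = a|u><u| + b|u><d| + c|d><u| + d|d><d|. *)
Record coin := Coin { ca : C; cb : C; cc : C; cd : C }.

Definition unitary (K : coin) : Prop :=
  Cplus (Cmult (Cconj (ca K)) (ca K)) (Cmult (Cconj (cc K)) (cc K)) = RtoC 1 /\
  Cplus (Cmult (Cconj (cb K)) (cb K)) (Cmult (Cconj (cd K)) (cd K)) = RtoC 1 /\
  Cplus (Cmult (Cconj (ca K)) (cb K)) (Cmult (Cconj (cc K)) (cd K)) = RtoC 0.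

Definition nontrivial (K : coin) : Prop :=
  ca K <> RtoC 0 /\ cb K <> RtoC 0 /\ cc K <> RtoC 0 /\ cd K <> RtoC 0.

(* coin state gamma = alpha|u> + beta|d>, as the pair (alpha, beta) *)
Definition cstate := (C * C)%type.

Definition setup := (coin * cstate)%type.

(* Vectors of l^2(Z) (x) C^2 as functions Z -> C^2 (psi j = (up, down)). *)
Definition apply_coin (K : coin) (v : cstate) : cstate :=
  (Cplus (Cmult (ca K) (fst v)) (Cmult (cb K) (snd v)),
   Cplus (Cmult (cc K) (fst v)) (Cmult (cd K) (snd v))).

(* W(C) = T (1 (x) C): apply C at every site, then shift up-component
   from j to j+1 and down-component from j to j-1. *)
Definition W (K : coin) (psi : Z -> cstate) : Z -> cstate :=
  fun j => (fst (apply_coin K (psi (j - 1)%Z)), snd (apply_coin K (psi (j + 1)%Z))).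

Definition init (g : cstate) : Z -> cstate :=
  fun j => if Z.eq_dec j 0 then g else (RtoC 0, RtoC 0).

Fixpoint psi (S : setup) (n : nat) : Z -> cstate :=
  match n with
  | O => init (snd S)
  | Datatypes.S m => W (fst S) (psi S m)
  end.

(* p_S(j, n) = <psi_n | (|j><j| (x) 1) | psi_n> *)
Definition p (S : setup) (j : Z) (n : nat) : R :=
  (Cmod (fst (psi S n j)))^2 + (Cmod (snd (psi S n j)))^2.

Definition dist_equiv (S1 S2 : setup) : Prop :=
  forall (j : Z) (n : nat), p S1 j n = p S2 j n.

(* lambda_C = |alpha|^2 - |beta|^2 + (a alpha conj(b beta) + conj(a alpha) b beta)/|a|^2
   (the numerator is real; we take its real part). *)
Definition lambda (S : setup) : R :=
  let K := fst S in let al := fst (snd S) in let be := snd (snd S) in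
  (Cmod al)^2 - (Cmod be)^2
  + Re (Cplus (Cmult (Cmult (ca K) al) (Cconj (Cmult (cb K) be)))
              (Cmult (Cconj (Cmult (ca K) al)) (Cmult (cb K) be)))
    / (Cmod (ca K))^2.

Definition f_lim (S : setup) (x : R) : R :=
  let A := Cmod (ca (fst S)) in
  if Rlt_dec (- A) x then
    if Rlt_dec x A then
      sqrt (1 - A^2) * (1 - lambda S * x) / (PI * (1 - x^2) * sqrt (A^2 - x^2))
    else 0
  else 0.

Definition asym_equiv (S1 S2 : setup) : Prop :=
  nontrivial (fst S1) /\ nontrivial (fst S2) /\ f_lim S1 = f_lim S2.

Definition Ctheta (t : R) : coin :=
  Coin (RtoC (cos t)) (RtoC (sin t)) (RtoC (- sin t)) (RtoC (cos t)).
Definition gamma_phi (f : R) : cstate := (RtoC (cos f), RtoC (sin f)).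

(* Main.v *)
Require Import Defs.
From Stdlib Require Import Reals ZArith Lra FunctionalExtensionality.
From Coquelicot Require Import Coquelicot.
Open Scope R_scope.

Lemma cmod2 (x : R) : Cmod (RtoC x) ^ 2 = x ^ 2.
Proof. rewrite Cmod_R. rewrite <- (pow2_abs x). reflexivity. Qed.

Lemma lam_eq t f : cos t <> 0 -> lambda (Ctheta t, gamma_phi f) = cos (t - 2 * f) / cos t.
Proof.
  intro H. unfold lambda; simpl fst; simpl snd.
  unfold Ctheta, gamma_phi. simpl ca; simpl cb; simpl fst; simpl snd.
  rewrite !cmod2.
  rewrite cos_minus, cos_2a, sin_2a.
  unfold Cplus, Cmult, Cconj, RtoC, Re; simpl. field; auto.
Qed.

Lemma p22 t f : p (Ctheta t, gamma_phi f) 2%Z 2 = (cos t * cos (t - f))^2.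
Proof.
  assert (E : psi (Ctheta t, gamma_phi f) 2 2%Z = (RtoC (cos t * cos (t - f)), RtoC 0)).
  { simpl psi. unfold W, init, apply_coin. simpl.
    rewrite cos_minus. unfold RtoC. f_equal; unfold Cplus, Cmult; simpl; f_equal; ring. }
  unfold p. rewrite E. simpl fst; simpl snd. rewrite !cmod2. ring.
Qed.

Lemma RtoC_nz x : x <> 0 -> RtoC x <> RtoC 0.
Proof. intros H E. injection E. auto. Qed.

Lemma part1 theta phi1 phi2 :
     0 < theta < PI / 2 ->
     0 <= phi1 <= PI / 2 -> 0 <= phi2 <= PI / 2 ->
     phi1 + phi2 = theta ->
     asym_equiv (Ctheta theta, gamma_phi phi1) (Ctheta theta, gamma_phi phi2).
Proof.
  intros Ht H1 H2 Hs.
  assert (Hc : 0 < cos theta) by (apply cos_gt_0; lra).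
  assert (Hsn : 0 < sin theta) by (apply sin_gt_0; lra).
  assert (NT : nontrivial (Ctheta theta)).
  { unfold nontrivial, Ctheta; simpl; repeat split; apply RtoC_nz; lra. }
  split; [exact NT|split; [exact NT|]].
  apply functional_extensionality; intro x. unfold f_lim.
  rewrite !lam_eq by lra.
  replace (theta - 2 * phi2) with (- (theta - 2 * phi1)) by lra.
  rewrite cos_neg. reflexivity.
Qed.

Lemma sc2 x : sin x * sin x + cos x * cos x = 1.
Proof. pose proof (sin2_cos2 x). unfold Rsqr in H. lra. Qed.

Lemma unit_C t : unitary (Ctheta t).
Proof.
  pose proof (sc2 t).
  unfold unitary, Ctheta; simpl; unfold Cplus, Cmult, Cconj, RtoC; simpl;
  repeat split; f_equal; nra.
Qed.

Lemma norm_g f : Cmod (fst (gamma_phi f)) ^ 2 + Cmod (snd (gamma_phi f)) ^ 2 = 1.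
Proof. pose proof (sc2 f). unfold gamma_phi; simpl fst; simpl snd. rewrite !cmod2. nra. Qed.

Lemma part2 : p (Ctheta (12/10), gamma_phi (2/10)) 2%Z 2 <> p (Ctheta (12/10), gamma_phi 1) 2%Z 2.
Proof.
  rewrite !p22.
  replace (12/10 - 2/10) with 1 by lra.
  replace (12/10 - 1) with (2/10) by lra.
  pose proof PI2_3_2.
  assert (Hc : 0 < cos (12/10)) by (apply cos_gt_0; lra).
  assert (H1 : 0 < cos 1) by (apply cos_gt_0; lra).
  assert (H2 : cos 1 < cos (2/10)) by (apply cos_decreasing_1; lra).
  intro E.
  assert (Hu : cos (12/10) * cos 1 < cos (12/10) * cos (2/10)) by nra.
  assert (Hp : 0 < cos (12/10) * cos 1) by nra.
  set (u := cos (12/10) * cos 1) in *. set (v := cos (12/10) * cos (2/10)) in *.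
  assert (0 < (v - u) * (v + u)) by (apply Rmult_lt_0_compat; lra).
  simpl in E. nra.
Qed.

Theorem mainTheorem6 :
  (forall theta phi1 phi2 : R,
     0 < theta < PI / 2 ->
     0 <= phi1 <= PI / 2 -> 0 <= phi2 <= PI / 2 ->
     phi1 + phi2 = theta ->
     asym_equiv (Ctheta theta, gamma_phi phi1) (Ctheta theta, gamma_phi phi2)) /\
  (~ dist_equiv (Ctheta (12/10), gamma_phi (2/10)) (Ctheta (12/10), gamma_phi 1) /\
   exists j : Z,
     p (Ctheta (12/10), gamma_phi (2/10)) j 2 <> p (Ctheta (12/10), gamma_phi 1) j 2) /\
  (exists S1 S2 : setup,
     unitary (fst S1) /\ unitary (fst S2) /\
     Cmod (fst (snd S1)) ^ 2 + Cmod (snd (snd S1)) ^ 2 = 1 /\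
     Cmod (fst (snd S2)) ^ 2 + Cmod (snd (snd S2)) ^ 2 = 1 /\
     asym_equiv S1 S2 /\ ~ dist_equiv S1 S2).
Proof.
  split; [exact part1|].
  assert (ND : ~ dist_equiv (Ctheta (12/10), gamma_phi (2/10)) (Ctheta (12/10), gamma_phi 1)).
  { intro H. apply part2. apply H. }
  split; [split; [exact ND| exists 2%Z; exact part2]|].
  exists (Ctheta (12/10), gamma_phi (2/10)), (Ctheta (12/10), gamma_phi 1).
  simpl fst; simpl snd.
  pose proof PI2_3_2.
  split; [apply unit_C|]. split; [apply unit_C|].
  split; [apply (norm_g (2/10))|]. split; [apply (norm_g 1)|].
  split; [|exact ND].
  apply part1; lra.
Qed.
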